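(* Let $\mathcal E$ be a nest on a complex Banach space $X$ and let $\mathcal J$ be a $\mathcal T(\mathcal E)$-bimodule. Then $(\Phi_{\mathcal J},\Phi^e_{\mathcal J})$ is an admissible support function pair on $\mathcal E$.
   Context: A nest $\mathcal E$ on $X$ is a family of closed linear subspaces of $X$, totally ordered by inclusion, containing $\{0\}$ and $X$, closed under arbitrary meets $\wedge$ (intersections) and joins $\vee$ (norm-closed linear spans of unions). For $E\in\mathcal E$, $E_-=\vee\{F\in\mathcal E: F\subsetneq E\}$ and $E_+=\wedge\{F\in\mathcal E: E\subsetneq F\}$. $\mathcal T(\mathcal E)=\{T\in\mathcal B(X): TE\subseteq E\ \forall E\in\mathcal E\}$; a $\mathcal T(\mathcal E)$-bimodule is a linear subspace $\mathcal J\subseteq\mathcal B(X)$ with $\mathcal T(\mathcal E)\mathcal J,\mathcal J\mathcal T(\mathcal E)\subseteq\mathcal J$. For subspaces $M,L$ ($L$ closed), $M/L=\{m+L:m\in M\}$ and $\dim(M/L)$ is its dimension. A support function is an inclusion-preserving map $\mathcal E\to\mathcal E$; it is admissible if for all $N\neq\{0\}$, $\vee_{E\subsetneq N}\Phi(E)=\Phi(N_-)$. $\Phi\le\Theta$ means $\Phi(E)\subseteq\Theta(E)$ for all $E$. $\mathcal E_f=\{N\in\mathcal E: 0<\dim(N/N_-)<\infty\}$. An essential support function is a support function $\Psi$ such that for all $N,N_1,N_2\in\mathcal E$ with $N_1\subseteq N_2$: (a) $\Psi(N)\in\mathcal E_f\Rightarrow\Psi(N)=\Psi(N)_+$; (b)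 $\dim(N_2/N_1)<\infty\Rightarrow\Psi(N_2)=\Psi(N_1)$. A support function pair is a pair $(\Phi,\Psi)$ with $\Phi$ admissible, $\Phi(\{0\})=\{0\}$, $\Psi$ an essential support function and $\Psi\le\Phi$; it is admissible if moreover $\Psi(N)\in\mathcal E_f\Rightarrow\Psi(N)\subsetneq\Phi(N)$ for all $N\in\mathcal E$. For a bimodule $\mathcal J$: $\Phi_{\mathcal J}(E)=[\mathcal JE]$ (norm-closed linear span of $\{Tx:T\in\mathcal J,x\in E\}$), and $\Phi^e_{\mathcal J}(N)=\wedge\{L\in\mathcal E: \dim(TN/L)<\infty\ \forall T\in\mathcal J\}$. *)

(* Defs.v *)
(* Complex scalars: C := R[i] for R : realType
   (mathcomp-real-closed's complex numbers), a complex Banach space is a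
   completeNormedModType R[i]. *)
From mathcomp Require Import all_boot all_algebra.
From mathcomp Require Import all_classical all_reals all_analysis.
From mathcomp Require Import complex.

Set Implicit Arguments.
Unset Strict Implicit.
Unset Printing Implicit Defensive.

Import GRing.Theory Num.Theory.
Local Open Scope classical_set_scope.
Local Open Scope ring_scope.

Section NestDefs.
Context {R : realType} {V : normedModType R[i]}.

Definition lin_subspace (M : set V) : Prop :=
  M 0 /\ forall (a : R[i]) (x y : V), M x -> M y -> M (a *: x + y).

Definition closed_subspace (M : set V) : Prop := lin_subspace M /\ closed M.

Definition cspan (S : set V) : set V :=
  \bigcap_(M in [set M | closed_subspace M /\ S `<=` M]) M.

Definition smeet (F : set (set V)) : set V := \bigcap_(M in F) M.
Definition sjoin (F : set (set V)) : set V := cspan (\bigcup_(M in F) M).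

Definition is_nest (E : set (set V)) : Prop :=
  [/\ (forall M, E M -> closed_subspace M),
      (forall M N, E M -> E N -> M `<=` N \/ N `<=` M),
      E [set (0 : V)], E setT &
      forall F, F `<=` E -> E (smeet F) /\ E (sjoin F)].

Definition nest_minus (E : set (set V)) (N : set V) : set V :=
  sjoin [set F | E F /\ F `<=` N /\ F <> N].
Definition nest_plus (E : set (set V)) (N : set V) : set V :=
  smeet [set F | E F /\ N `<=` F /\ N <> F].

Definition bounded_op (T : V -> V) : Prop :=
  (forall (a : R[i]) (x y : V), T (a *: x + y) = a *: T x + T y) /\
  continuous T.

Definition nest_alg (E : set (set V)) (T : V -> V) : Prop :=
  bounded_op T /\ forall M, E M -> T @` M `<=` M.

Definition bimodule (E : set (set V)) (J : set (V -> V)) : Prop :=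
  [/\ J `<=` bounded_op,
      J (fun _ => 0),
      (forall (a : R[i]) S T, J S -> J T -> J (fun x => a *: S x + T x)) &
      forall A S, nest_alg E A -> J S -> J (A \o S) /\ J (S \o A)].

(* dim (M / L) < oo : M / L = {m + L} is spanned by finitely many cosets *)
Definition quot_fin_dim (M L : set V) : Prop :=
  exists (n : nat) (v : 'I_n -> V), (forall i, M (v i)) /\
    forall x, M x -> exists c : 'I_n -> R[i], L (x - \sum_(i < n) c i *: v i).

(* 0 < dim (M / L) : M / L is not the zero space *)
Definition quot_dim_pos (M L : set V) : Prop := exists x, M x /\ ~ L x.

Definition nest_f (E : set (set V)) (N : set V) : Prop :=
  [/\ E N, quot_dim_pos N (nest_minus E N) & quot_fin_dim N (nest_minus E N)].

Definition support_fun (E : set (set V)) (Phi : set V -> set V) : Prop :=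
  (forall N, E N -> E (Phi N)) /\
  (forall N1 N2, E N1 -> E N2 -> N1 `<=` N2 -> Phi N1 `<=` Phi N2).

Definition admissible_sf (E : set (set V)) (Phi : set V -> set V) : Prop :=
  support_fun E Phi /\
  forall N, E N -> N <> [set (0 : V)] ->
    sjoin (Phi @` [set F | E F /\ F `<=` N /\ F <> N]) = Phi (nest_minus E N).

Definition essential_sf (E : set (set V)) (Psi : set V -> set V) : Prop :=
  [/\ support_fun E Psi,
      (forall N, E N -> nest_f E (Psi N) -> Psi N = nest_plus E (Psi N)) &
      (forall N1 N2, E N1 -> E N2 -> N1 `<=` N2 -> quot_fin_dim N2 N1 ->
         Psi N2 = Psi N1)].

Definition sf_le (E : set (set V)) (Phi Theta : set V -> set V) : Prop :=
  forall N, E N -> Phi N `<=` Theta N.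

Definition sf_pair (E : set (set V)) (Phi Psi : set V -> set V) : Prop :=
  [/\ admissible_sf E Phi, Phi [set (0 : V)] = [set (0 : V)],
      essential_sf E Psi & sf_le E Psi Phi].

Definition admissible_sf_pair (E : set (set V)) (Phi Psi : set V -> set V)
  : Prop :=
  sf_pair E Phi Psi /\
  forall N, E N -> nest_f E (Psi N) -> Psi N `<=` Phi N /\ Psi N <> Phi N.

Definition Phi_J (J : set (V -> V)) (M : set V) : set V :=
  cspan [set y | exists T x, [/\ J T, M x & y = T x]].

Definition Phie_J (E : set (set V)) (J : set (V -> V)) (N : set V) : set V :=
  smeet [set L | E L /\ forall T, J T -> quot_fin_dim (T @` N) L].

End NestDefs.

(* Main.v *)
Require Import Defs.
From mathcomp Require Import all_boot all_algebra.
From mathcomp Require Import all_classical all_reals all_analysis.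
From mathcomp Require Import complex.
From mathcomp Require Import order ring lra.

Set Implicit Arguments.
Unset Strict Implicit.
Unset Printing Implicit Defensive.
Import Order.TTheory GRing.Theory Num.Theory.
Local Open Scope classical_set_scope.
Local Open Scope ring_scope.
Section LA.
Variables (R : realType) (X : normedModType R[i]).
Implicit Types (M L : set X) (s t : seq X).

Fixpoint ism (L : set X) (s : seq X) (x : X) : Prop :=
  match s with
  | [::] => L x
  | v :: s' => exists a : R[i], ism L s' (x - a *: v)
  end.

Lemma lin_sub0 M : lin_subspace M -> M 0.
Proof. by case. Qed.

Lemma lin_subC M a x y : lin_subspace M -> M x -> M y -> M (a *: x + y).
Proof. by case=> _ H; apply: H. Qed.

Lemma lin_subD M x y : lin_subspace M -> M x -> M y -> M (x + y).
Proof. by move=> HM Hx Hy; have := lin_subC 1 HM Hx Hy; rewrite scale1r. Qed.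

Lemma lin_subZ M a x : lin_subspace M -> M x -> M (a *: x).
Proof. by move=> HM Hx; have := lin_subC a HM Hx (lin_sub0 HM); rewrite addr0. Qed.

Lemma lin_subN M x : lin_subspace M -> M x -> M (- x).
Proof. by move=> HM Hx; have := lin_subZ (-1) HM Hx; rewrite scaleN1r. Qed.

Lemma lin_subB M x y : lin_subspace M -> M x -> M y -> M (x - y).
Proof. by move=> HM Hx Hy; apply: lin_subD => //; exact: lin_subN. Qed.

Lemma comb_eq (a b b' : R[i]) (x y v : X) :
  a *: x + y - (a * b + b') *: v = a *: (x - b *: v) + (y - b' *: v).
Proof.
rewrite scalerBr scalerDl scalerA opprD !addrA; congr (_ + _).
by rewrite -!addrA; congr (_ + _); rewrite addrC.
Qed.

Lemma ism_sub L s : lin_subspace L -> lin_subspace (ism L s).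
Proof.
move=> HL; elim: s => [|v s IH] //=; split.
  by exists 0; rewrite scale0r subr0; exact: lin_sub0.
move=> a x y [b Hb] [b' Hb']; exists (a * b + b').
rewrite comb_eq; exact: lin_subC.
Qed.

Lemma ism_trans A B s t x : (forall y, A y -> ism B t y) ->
  ism A s x -> ism B (s ++ t) x.
Proof.
move=> H; elim: s x => [|v s IH] x /=; first exact: H.
by case=> a Ha; exists a; apply: IH.
Qed.

Lemma ism_mono A B s x : A `<=` B -> ism A s x -> ism B s x.
Proof.
move=> AB; elim: s x => [|v s IH] x /=; first exact: AB.
by case=> a Ha; exists a; apply: IH.
Qed.

Lemma ism_img (T : X -> X) L s x :
  (forall (a : R[i]) x y, T (a *: x + y) = a *: T x + T y) ->
  ism L s x -> ism (T @` L) (map T s) (T x).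
Proof.
move=> lT; elim: s x => [|v s IH] x /=; first by move=> Lx; exists x.
case=> a Ha; exists a; have := IH _ Ha.
by rewrite (_ : x - a *: v = (- a) *: v + x) ?lT ?scaleNr 1?addrC.
Qed.

Lemma fd_sub L s : lin_subspace L -> forall M, lin_subspace M ->
  (forall x, M x -> ism L s x) ->
  exists t : seq X, (forall i, M (nth 0 t i)) /\ forall x, M x -> ism L t x.
Proof.
move=> HL; elim: s => [|u s IH] M HM Hs.
  by exists [::]; split => [i|//]; rewrite nth_nil; exact: lin_sub0.
pose M' := fun x => M x /\ ism L s x.
have HM' : lin_subspace M'.
  split; first by split; [exact: lin_sub0 | exact: lin_sub0 (ism_sub s HL)].
  move=> a x y [Mx Sx] [My Sy]; split; first exact: lin_subC.
  exact: lin_subC (ism_sub s HL) Sx Sy.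
have [t [Ht1 Ht2]] := IH M' HM' (fun x (H : M' x) => proj2 H).
case: (pselect (forall x, M x -> ism L s x)) => [all|].
  exists t; split; first by move=> i; case: (Ht1 i).
  by move=> x Mx; apply: Ht2; split => //; exact: all.
move=> /existsNP[m0 /not_implyP[Mm0 Nm0]].
have [a0 Ha0] := Hs _ Mm0.
have a0N : a0 != 0.
  by apply/eqP => a00; apply: Nm0; move: Ha0; rewrite a00 scale0r subr0.
exists (m0 :: t); split.
  by case=> [|i] //=; case: (Ht1 i).
move=> x Mx; have [a Ha] := Hs _ Mx.
exists (a / a0); apply: Ht2; split.
  by apply: lin_subB => //; apply: lin_subZ.
have -> : x - (a / a0) *: m0 = (- (a / a0)) *: (m0 - a0 *: u) + (x - a *: u).
  rewrite !scaleNr scalerBr scalerA divfK // opprB.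
  by rewrite [RHS]addrC addrA subrK.
exact: lin_subC (ism_sub s HL) Ha0 Ha.
Qed.

Lemma ism_sum L n (v : 'I_n -> X) x :
  (exists c : 'I_n -> R[i], L (x - \sum_(i < n) c i *: v i)) ->
  ism L (map v (enum 'I_n)) x.
Proof.
elim: n v x => [|n IH] v x [c Hc].
  by rewrite enum_ord0 /=; move: Hc; rewrite big_ord0 subr0.
rewrite enum_ordSl /= -map_comp; exists (c ord0).
apply: (IH (v \o lift ord0)); exists (c \o lift ord0).
by move: Hc; rewrite big_ord_recl opprD addrA.
Qed.

Lemma sum_ism L s x : ism L s x ->
  exists c : 'I_(size s) -> R[i], L (x - \sum_(i < size s) c i *: nth 0 s i).
Proof.
elim: s x => [|v s IH] x /=.
  by move=> Lx; exists (fun _ => 0); rewrite big_ord0 subr0.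
case=> a /IH[c Hc].
exists (fun i : 'I_(size s).+1 => if unlift ord0 i is Some j then c j else a).
rewrite big_ord_recl /= unlift_none.
under eq_bigr => i _ do rewrite liftK.
by rewrite opprD addrA.
Qed.

Lemma qfd_ism M L : quot_fin_dim M L ->
  exists s, forall x, M x -> ism L s x.
Proof.
case=> n [v [_ H]]; exists (map v (enum 'I_n)) => x Mx.
exact: ism_sum (H x Mx).
Qed.

Lemma ism_qfd M L s : lin_subspace L -> lin_subspace M ->
  (forall x, M x -> ism L s x) -> quot_fin_dim M L.
Proof.
move=> HL HM Hs; have [t [Ht1 Ht2]] := fd_sub HL HM Hs.
exists (size t), (fun i => nth 0 t i); split => // x Mx.
exact: sum_ism (Ht2 x Mx).
Qed.

End LA.
Section Basic.
Variables (R : realType) (X : normedModType R[i]).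
Implicit Types (M L N S : set X) (E : set (set X)).

Lemma cspan_sub S : S `<=` cspan S.
Proof. by move=> x Sx M [_ SM]; exact: SM. Qed.

Lemma cspan_min S M : closed_subspace M -> S `<=` M -> cspan S `<=` M.
Proof. by move=> HM SM x; apply; split. Qed.

Lemma cspan_cs S : closed_subspace (cspan S).
Proof.
split; last by apply: closed_bigI => M [[_ cM] _].
split; first by move=> M [[HM _] _]; exact: lin_sub0 HM.
move=> a x y Hx Hy M [[HM cM] SM]; apply: (lin_subC a HM); [apply: Hx|apply: Hy]; by split.
Qed.

Lemma cspan_mono S S' : S `<=` S' -> cspan S `<=` cspan S'.
Proof.
move=> SS; apply: cspan_min; first exact: cspan_cs.
by move=> x /SS; exact: cspan_sub.
Qed.

Lemma cs_smeet (F : set (set X)) : (forall M, F M -> closed_subspace M) ->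
  closed_subspace (smeet F).
Proof.
move=> HF; split; last by apply: closed_bigI => M /HF[].
split; first by move=> M /HF[H _]; exact: lin_sub0.
move=> a x y Hx Hy M FM; have [H _] := HF M FM.
by apply: (lin_subC a H); [apply: Hx|apply: Hy].
Qed.

Lemma smeet_sub F M : F M -> smeet F `<=` M.
Proof. by move=> FM x; apply. Qed.

Lemma sub_smeet F M : (forall N, F N -> M `<=` N) -> M `<=` smeet F.
Proof. by move=> H x Mx N FN; apply: H. Qed.

Lemma sjoin_sup F M : F M -> M `<=` sjoin F.
Proof. by move=> FM x Mx; apply: cspan_sub; exists M. Qed.

Lemma sjoin_min F M : closed_subspace M -> (forall N, F N -> N `<=` M) ->
  sjoin F `<=` M.
Proof. by move=> HM H; apply: cspan_min => // x [N FN Nx]; exact: (H N). Qed.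

Section Nest.
Variable E : set (set X).
Hypothesis nE : is_nest E.

Lemma nest_cs M : E M -> closed_subspace M.
Proof. by case: nE => H *; exact: H. Qed.

Lemma nest_ls M : E M -> lin_subspace M.
Proof. by move=> /nest_cs[]. Qed.

Lemma nest_tot M N : E M -> E N -> M `<=` N \/ N `<=` M.
Proof. by case: nE => _ H *; exact: H. Qed.

Lemma nest_smeet F : F `<=` E -> E (smeet F).
Proof. by case: nE => _ _ _ _ H FE; case: (H F FE). Qed.

Lemma nest_sjoin F : F `<=` E -> E (sjoin F).
Proof. by case: nE => _ _ _ _ H FE; case: (H F FE). Qed.

Lemma nest_0 : E [set 0].
Proof. by case: nE. Qed.

Lemma nest_minusE N : E (nest_minus E N).
Proof. by apply: nest_sjoin => M []. Qed.

Lemma nest_plusE N : E (nest_plus E N).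
Proof. by apply: nest_smeet => M []. Qed.

End Nest.
End Basic.
Section NR.
Local Open Scope complex_scope.
Variables (R : realType) (X : normedModType R[i]).

Definition rs (t : R) (x : X) : X := t%:C *: x.
Definition nr (x : X) : R := complex.Re `|x|.

Lemma realC_eq (z : R[i]) : complex.Im z = 0 -> z = (complex.Re z)%:C.
Proof. by case: z => a b /= ->. Qed.

Lemma normE (x : X) : `|x| = (nr x)%:C.
Proof. by apply: realC_eq; apply: ger0_Im. Qed.

Lemma nr_ge0 (x : X) : 0 <= nr x.
Proof. by have := normr_ge0 x; rewrite normE lecR. Qed.

Lemma nrD (x y : X) : nr (x + y) <= nr x + nr y.
Proof. by have := ler_normD x y; rewrite !normE -rmorphD lecR. Qed.

Lemma normCr (t : R) : `|t%:C| = `|t|%:C.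
Proof. by rewrite normc_def /= expr0n /= addr0 sqrtr_sqr. Qed.

Lemma nrZ (t : R) (x : X) : nr (rs t x) = `|t| * nr x.
Proof. by rewrite /nr /rs normrZ normCr normE -rmorphM. Qed.

Lemma nrN (x : X) : nr (- x) = nr x.
Proof. by rewrite /nr normrN. Qed.

Lemma rsDl a b x : rs (a + b) x = rs a x + rs b x.
Proof. by rewrite /rs rmorphD scalerDl. Qed.
Lemma rsDr a x y : rs a (x + y) = rs a x + rs a y.
Proof. by rewrite /rs scalerDr. Qed.
Lemma rsA a b x : rs a (rs b x) = rs (a * b) x.
Proof. by rewrite /rs scalerA rmorphM. Qed.
Lemma rs1 x : rs 1 x = x.
Proof. by rewrite /rs rmorph1 scale1r. Qed.
Lemma rs0 x : rs 0 x = 0.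
Proof. by rewrite /rs rmorph0 scale0r. Qed.
Lemma rsr0 a : rs a 0 = 0.
Proof. by rewrite /rs scaler0. Qed.
Lemma rsN a x : rs (- a) x = - rs a x.
Proof. by rewrite /rs rmorphN scaleNr. Qed.
Lemma rsNr a x : rs a (- x) = - rs a x.
Proof. by rewrite /rs scalerN. Qed.

End NR.
Section HBreal.
Variables (R : realType) (X : normedModType R[i]).
Variable p : X -> R.
Hypothesis psub : forall x y, p (x + y) <= p x + p y.
Hypothesis phom : forall t x, 0 <= t -> p (rs t x) = t * p x.

Local Notation rs := (@rs R X).

Definition valid (G : set (X * R)) : Prop :=
  [/\ (forall x a b, G (x, a) -> G (x, b) -> a = b),
      (forall x y a b t, G (x, a) -> G (y, b) -> G (rs t x + y, t * a + b)),
      (forall x a, G (x, a) -> a <= p x) & G (0, 0)].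

Lemma p0 : p 0 = 0.
Proof. by have := @phom 0 0 (lexx _); rewrite rs0 mul0r. Qed.

Lemma valid_two (U : set (X * R)) : U (0, 0) ->
  (forall q1 q2, U q1 -> U q2 -> exists V, [/\ valid V, V `<=` U, V q1 & V q2]) ->
  valid U.
Proof.
move=> U0 H; split => //.
- move=> x a b Ha Hb; have [V [[f _ _ _] _ Va Vb]] := H _ _ Ha Hb; exact: f Va Vb.
- move=> x y a b t Ha Hb; have [V [[_ l _ _] VU Va Vb]] := H _ _ Ha Hb.
  exact/VU/l.
- by move=> x a Ha; have [V [[_ _ d _] _ Va _]] := H _ _ Ha Ha; exact: d Va.
Qed.

Section Ext.
Variable G : set (X * R).
Hypothesis vG : valid G.
Variable z : X.
Hypothesis nz : ~ exists a, G (z, a).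

Let Gf : forall x a b, G (x, a) -> G (x, b) -> a = b.
Proof. by case: vG. Qed.
Let Gl : forall x y a b t, G (x, a) -> G (y, b) -> G (rs t x + y, t * a + b).
Proof. by case: vG. Qed.
Let Gd : forall x a, G (x, a) -> a <= p x.
Proof. by case: vG. Qed.
Let G0 : G (0, 0).
Proof. by case: vG. Qed.

Let GZ x a t : G (x, a) -> G (rs t x, t * a).
Proof. by move=> Ha; have := Gl t Ha G0; rewrite !addr0. Qed.

Let GD x y a b : G (x, a) -> G (y, b) -> G (x + y, a + b).
Proof. by move=> Ha Hb; have := Gl 1 Ha Hb; rewrite rs1 mul1r. Qed.

Let S := [set r | exists y u, G (y, u) /\ r = u - p (y - z)].

Let Sbound y u y' u' : G (y, u) -> G (y', u') -> u - p (y - z) <= p (y' + z) - u'.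
Proof.
move=> Hu Hu'; have h1 := Gd (GD Hu Hu').
have := psub (y - z) (y' + z); rewrite addrA (addrAC y (- z)) subrK => h2; lra.
Qed.

Let c := sup S.

Let cge y u : G (y, u) -> u - p (y - z) <= c.
Proof.
move=> Hu; apply: sup_upper_bound; last by exists y, u.
split; first by exists (0 - p (0 - z)), 0, 0.
exists (p (0 + z) - 0) => r [y' [u' [Hu' ->]]]; exact: Sbound Hu' G0.
Qed.

Let cle y u : G (y, u) -> c <= p (y + z) - u.
Proof.
move=> Hu; apply: ge_sup; first by exists (0 - p (0 - z)), 0, 0.
move=> r [y' [u' [Hu' ->]]]; exact: Sbound Hu' Hu.
Qed.

Definition ext := [set q | exists y u (t : R), G (y, u) /\ q = (y + rs t z, u + t * c)].

Lemma ext_valid : valid ext.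
Proof.
split.
- move=> x a b [y [u [t [Hu [-> ->]]]]] [y' [u' [t' [Hu' [e ->]]]]].
  have [tt|tt] := eqVneq t t'.
    subst t'; move/addIr: e => yy; subst y'; by rewrite (Gf Hu Hu').
  exfalso; apply: nz; exists ((t' - t)^-1 * (u - u')).
  have Hd := Gl (-1) Hu' Hu; rewrite rsN rs1 mulN1r in Hd.
  have Hz := GZ ((t' - t)^-1) Hd.
  have ey : y = y' + rs t' z - rs t z by rewrite -e addrK.
  have ez : rs (t' - t)^-1 (- y' + y) = z.
    rewrite ey addrA addKr -rsN -rsDl rsA mulVf ?rs1 //.
    by rewrite subr_eq0 eq_sym.
  by rewrite ez (addrC (- u')) in Hz.
- move=> x y a b r [y1 [u1 [t1 [H1 [-> ->]]]]] [y2 [u2 [t2 [H2 [-> ->]]]]].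
  exists (rs r y1 + y2), (r * u1 + u2), (r * t1 + t2); split; first exact: Gl.
  congr (_, _).
    rewrite rsDr rsA rsDl -!addrA; congr (_ + _).
    by rewrite addrCA.
  by rewrite mulrDr mulrA mulrDl -!addrA; congr (_ + _); rewrite addrCA.
- move=> x a [y [u [t [Hu [-> ->]]]]].
  have [t0|t0|->] := ltgtP t 0; last by rewrite rs0 addr0 mul0r addr0; exact: Gd.
  +
    have s0 : 0 < - t by rewrite oppr_gt0.
    have Hu1 := GZ ((- t)^-1) Hu.
    have e1 : rs (- t) (rs (- t)^-1 y - z) = y + rs t z.
      by rewrite rsDr rsA mulfV ?gt_eqF // rs1 rsNr rsN opprK.
    have e2 : p (y + rs t z) = - t * p (rs (- t)^-1 y - z).
      by rewrite -e1 phom // ltW.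
    have e3 : - t * ((- t)^-1 * u) = u by rewrite mulrA mulfV ?gt_eqF // mul1r.
    have h := ler_wpM2l (ltW s0) (cge Hu1).
    rewrite mulrBr e3 in h; rewrite e2; lra.
  +
    have Hu1 := GZ (t^-1) Hu.
    have e1 : rs t (rs t^-1 y + z) = y + rs t z.
      by rewrite rsDr rsA mulfV ?gt_eqF // rs1.
    have e2 : p (y + rs t z) = t * p (rs t^-1 y + z).
      by rewrite -e1 phom // ltW.
    have e3 : t * (t^-1 * u) = u by rewrite mulrA mulfV ?gt_eqF // mul1r.
    have h := ler_wpM2l (ltW t0) (cle Hu1).
    rewrite mulrBr e3 in h; rewrite e2; lra.
- by exists 0, 0, 0; rewrite rs0 addr0 mul0r addr0.
Qed.

Lemma ext_sup : G `<=` ext.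
Proof. by move=> [x a] Ha; exists x, a, 0; rewrite rs0 mul0r !addr0. Qed.

Lemma ext_z : exists a, ext (z, a).
Proof. by exists c, 0, 0, 1; rewrite rs1 mul1r !add0r. Qed.

End Ext.

Variable G0 : set (X * R).
Hypothesis vG0 : valid G0.

Lemma hb_real : exists u : X -> R,
  [/\ forall x y t, u (rs t x + y) = t * u x + u y,
      forall x, u x <= p x & forall x a, G0 (x, a) -> u x = a].
Proof.
pose P (A : set (X * R)) := valid (A `|` G0).
have [A [PA Amax]] : exists A, P A /\ forall B, A `<` B -> ~ P B.
  apply: Zorn_bigcup => F FP Ftot.
  apply: valid_two; first by right; case: vG0.
  have key : forall q, ((\bigcup_(X in F) X) `|` G0) q ->
      G0 q \/ exists2 A, F A & A q.
    by move=> q [[A FA Aq]|G0q]; [right; exists A|left].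
  move=> q1 q2 /key H1 /key H2.
  have sub A : F A -> A `|` G0 `<=` (\bigcup_(X in F) X) `|` G0.
    by move=> FA q [Aq|Gq]; [left; exists A|right].
  case: H1 => [g1|[A1 FA1 A1q]]; case: H2 => [g2|[A2 FA2 A2q]].
  - by exists G0; split => //; move=> q Gq; right.
  - exists (A2 `|` G0); split; [exact: FP | exact: sub | by right | by left].
  - exists (A1 `|` G0); split; [exact: FP | exact: sub | by left | by right].
  - have [A12|A21] := Ftot _ _ FA1 FA2.
    + exists (A2 `|` G0); split; [exact: FP | exact: sub | left; exact: A12 | by left].
    + exists (A1 `|` G0); split; [exact: FP | exact: sub | by left | left; exact: A21].
pose G := A `|` G0.
have tot : forall x, exists a, G (x, a).
  move=> x; apply: contrapT => nx.
  have vext := ext_valid PA nx.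
  apply: (Amax (ext G x)).
    split; first by move=> q Aq; apply: ext_sup; left.
    move=> sub; have [a Ha] : exists a, ext G x (x, a) by exact: ext_z.
    apply: nx; exists a.
    by left; exact: sub.
  rewrite /P (_ : ext G x `|` G0 = ext G x) //.
  by apply/seteqP; split => [q [//|Gq]|q Hq]; [apply: ext_sup; right|left].
have [u Hu] := choice tot.
case: PA => Gf Gl Gd G00.
exists u; split.
- by move=> x y t; apply: Gf (Hu _) (Gl _ _ _ _ _ (Hu x) (Hu y)).
- by move=> x; apply: Gd (Hu x).
- by move=> x a Ha; apply: Gf (Hu x) _; right.
Qed.

End HBreal.
Section Sep.
Local Open Scope complex_scope.
Variables (R : realType) (X : normedModType R[i]).
Local Notation rs := (@rs R X).
Local Notation nr := (@nr R X).

Lemma dist_pos (K : set X) x0 : closed K -> ~ K x0 ->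
  exists2 d : R, 0 < d & forall k, K k -> d <= nr (x0 - k).
Proof.
move=> cK nK.
have := closed_openC cK; rewrite openE => /(_ x0 nK).
rewrite /interior => /nbhs_ballP[e e00 sub].
have e0 : (0 : R[i]) < e := e00.
have Ie : complex.Im e = 0 by apply: ger0_Im; exact: ltW.
exists (complex.Re e).
  by move: e0; rewrite ltcE /= Ie eqxx.
move=> k Kk; rewrite leNgt; apply/negP => lt.
apply: (sub k) => //.
rewrite -ball_normE /ball_ /= normE (realC_eq Ie) ltcR //.
Qed.

Lemma sqrt_le (a b : R) : Num.sqrt (a ^+ 2 + b ^+ 2) <= `|a| + `|b|.
Proof.
have -> : `|a| + `|b| = Num.sqrt ((`|a| + `|b|) ^+ 2).
  by rewrite sqrtr_sqr; symmetry; apply: ger0_norm; exact: addr_ge0.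
apply: ler_wsqrtr.
have ha := normr_ge0 a; have hb := normr_ge0 b.
rewrite sqrrD -(real_normK (num_real a)) -(real_normK (num_real b)); nra.
Qed.

Lemma sep (K : set X) x0 : closed_subspace K -> ~ K x0 ->
  exists g : X -> R[i], exists2 k : R, 0 <= k &
    [/\ (forall a x y, g (a *: x + y) = a * g x + g y),
        (forall y, K y -> g y = 0), g x0 != 0 &
        (forall z, complex.Re `|g z| <= k * nr z)].
Proof.
move=> [lK cK] nK.
have [d d0 Hd] := dist_pos cK nK.
pose p z := nr z / d.
have psub : forall x y, p (x + y) <= p x + p y.
  by move=> x y; rewrite /p -mulrDl ler_pM2r ?invr_gt0 // nrD.
have phom : forall t x, 0 <= t -> p (rs t x) = t * p x.
  by move=> t x t0; rewrite /p nrZ ger0_norm // mulrA.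
have pge0 z : 0 <= p z by rewrite /p divr_ge0 ?nr_ge0 // ltW.
pose G0 := [set q | exists k t, K k /\ q = (k + rs t x0, t)].
have KZ t k : K k -> K (rs t k) by move=> Kk; exact: lin_subZ.
have vG0 : valid p G0.
  split.
  - move=> x a b [k [t [Kk [-> ->]]]] [k' [t' [Kk' [e ->]]]].
    apply: contrapT => tt; apply: nK.
    have e1 : rs (t - t') x0 = k' - k.
      by apply: (addrI k); rewrite rsDl rsN addrA e addrK addrC subrK.
    have -> : x0 = rs (t - t')^-1 (k' - k).
      by rewrite -e1 rsA mulVf ?rs1 // subr_eq0; apply/eqP.
    by apply: KZ; exact: lin_subB.
  - move=> x y a b r [k [t [Kk [-> ->]]]] [k' [t' [Kk' [-> ->]]]].
    exists (rs r k + k'), (r * t + t'); split; first by apply: lin_subD => //; exact: KZ.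
    congr (_, _); rewrite rsDr rsA rsDl -!addrA; congr (_ + _); by rewrite addrCA.
  - move=> x a [k [t [Kk [-> ->]]]].
    have [t0|t0] := leP t 0; first exact: le_trans t0 (pge0 _).
    have e1 : k + rs t x0 = rs t (x0 - rs t^-1 (- k)).
      by rewrite rsDr rsNr rsA mulfV ?gt_eqF // rs1 opprK addrC.
    rewrite /p e1 nrZ gtr0_norm // ler_pdivlMr //.
    rewrite ler_pM2l //; apply: Hd; apply: KZ; exact: lin_subN.
  - by exists 0, 0; split; [exact: lin_sub0 | rewrite rs0 addr0].
have [u [ul ud u0]] := hb_real psub phom vG0.
have u00 : u 0 = 0.
  by have := ul 0 0 1; rewrite rsr0 addr0 mul1r => h; lra.
have uN x : u (- x) = - u x.
  by have := ul x 0 (-1); rewrite rsN rs1 addr0 mulN1r u00 addr0.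
have uabs x : `|u x| <= p x.
  rewrite ler_norml ud andbT lerNl -uN.
  by apply: le_trans (ud _) _; rewrite /p nrN.
have uK y : K y -> u y = 0.
  by move=> Ky; rewrite (u0 y 0) //; exists y, 0; rewrite rs0 addr0.
have ux0 : u x0 = 1.
  by rewrite (u0 x0 1) //; exists 0, 1; split; [exact: lin_sub0|rewrite rs1 add0r].
have iA (t : R) x : 'i *: rs t x = rs t ('i *: x).
  by rewrite /rs !scalerA mulrC.
have ii x : 'i *: ('i *: x) = - x :> X.
  by rewrite scalerA (_ : 'i * 'i = -1) ?scaleN1r //; simpc.
have ulin ar ai x y : u ((ar +i* ai) *: x + y) = ar * u x + ai * u ('i *: x) + u y.
  have -> : (ar +i* ai) *: x + y = rs ar x + (rs ai ('i *: x) + y).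
    by rewrite addrA /rs scalerA -scalerDl; congr (_ *: _ + _); simpc.
  by rewrite ul ul addrA.
pose g z := u z +i* (- u ('i *: z)).
exists g, (2 / d).
  by rewrite divr_ge0 // ltW.
split.
- move=> [ar ai] x y; rewrite /g ulin.
  have -> : 'i *: ((ar +i* ai) *: x + y) =
            (ar +i* ai) *: ('i *: x) + 'i *: y.
    by rewrite scalerDr !scalerA mulrC.
  rewrite ulin ii uN; simpc; congr (_ +i* _); ring.
- by move=> y Ky; rewrite /g uK // uK ?oppr0 //; exact: lin_subZ.
- by rewrite /g ux0; apply/negP => /eqP [] /eqP; rewrite oner_eq0.
- move=> z; rewrite /g normc_def /=.
  apply: le_trans (sqrt_le _ _) _.
  have h1 := uabs z; have h2 := uabs ('i *: z).
  have e : p ('i *: z) = p z.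
    by rewrite /p /nr normrZ normc_def /= expr0n /= add0r expr1n sqrtr1 mul1r.
  rewrite normrN; rewrite e in h2; rewrite /p in h1 h2.
  rewrite mulrAC -mulrA; lra.
Qed.

End Sep.
Section Lat.
Local Open Scope complex_scope.
Variables (R : realType) (X : normedModType R[i]).
Local Notation nr := (@nr R X).

Lemma cont_bound (f : X -> X) (k : R) : (forall x y, f (x - y) = f x - f y) ->
  0 <= k -> (forall z, nr (f z) <= k * nr z) -> continuous f.
Proof.
move=> fB k0 fb x; apply/cvgrPdist_lt => e e00.
have e0 : (0 : R[i]) < e := e00.
have Ie : complex.Im e = 0 by apply: ger0_Im; exact: ltW.
have er0 : 0 < complex.Re e by move: e0; rewrite ltcE /= Ie eqxx.
pose dl := complex.Re e / (k + 1).
have dl0 : (0 : R[i]) < dl%:C by rewrite ltcR divr_gt0 // ltr_wpDl.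
have := @cvgrPdist_lt _ _ _ (nbhs x) _ id x; case=> /(_ cvg_id) H _.
apply: filterS (H _ dl0) => z /=.
rewrite -fB !normE (realC_eq Ie) !ltcR => hz.
have := fb (x - z); have := nr_ge0 (x - z).
move: hz; rewrite /dl ltr_pdivlMr ?ltr_wpDl // => hz h1 h2; lra.
Qed.

Lemma rank1_op (g : X -> R[i]) (k : R) (y : X) : 0 <= k ->
  (forall a x y, g (a *: x + y) = a * g x + g y) ->
  (forall z, complex.Re `|g z| <= k * nr z) ->
  bounded_op (fun z => g z *: y).
Proof.
move=> k0 gl gb; split.
  by move=> a x x'; rewrite gl scalerDl scalerA.
have g0 : g 0 = 0.
  have := gl 1 0 0; rewrite scaler0 addr0 mul1r => h.
  by apply: (addrI (g 0)); rewrite addr0 -h.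
have gB x x' : g (x - x') = g x - g x'.
  rewrite (addrC x) (addrC (g x)).
  by have := gl (-1) x' x; rewrite scaleN1r mulN1r.
apply: (@cont_bound _ (k * nr y)).
- by move=> x x'; rewrite gB scalerBl.
- by rewrite mulr_ge0 // nr_ge0.
- move=> z; have hg := realC_eq (ger0_Im (normr_ge0 (g z))).
  rewrite {1}/nr normrZ hg (normE y) -rmorphM /=.
  by rewrite mulrAC; apply: ler_wpM2r; [exact: nr_ge0 | exact: gb].
Qed.

End Lat.
Section Lat2.
Variables (R : realType) (X : normedModType R[i]).
Variable E : set (set X).
Hypothesis nE : is_nest E.

Lemma plus_sub K : K `<=` nest_plus E K.
Proof. by apply: sub_smeet => N [_ [KN _]]. Qed.

Lemma rank1_plus (M : set X) K x : closed_subspace M ->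
  (forall A, nest_alg E A -> A @` M `<=` M) ->
  E K -> ~ K x -> M x -> nest_plus E K `<=` M.
Proof.
move=> [lM cM] inv EK nKx Mx y Py.
have [g [k k0 [gl gK gx gb]]] := sep (nest_cs nE EK) nKx.
pose A := fun z => g z *: y.
have nA : nest_alg E A.
  split; first exact: rank1_op k0 gl gb.
  move=> N EN _ [w Nw <-]; rewrite /A.
  have Hzero : K w -> N (g w *: y).
    by move=> Kw; rewrite gK // scale0r; exact: lin_sub0 (nest_ls nE EN).
  have [NK|KN] := nest_tot nE EN EK; first exact/Hzero/NK.
  case: (pselect (K = N)) => [KeN|KneN]; first by apply: Hzero; rewrite KeN.
  apply: lin_subZ (nest_ls nE EN) _; apply: Py; split => //.
have : M (A x) by apply: (inv A nA); exists x.
rewrite /A => /(lin_subZ (g x)^-1 lM); rewrite scalerA mulVf ?scale1r //.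
Qed.

Lemma lat (M : set X) : closed_subspace M ->
  (forall A, nest_alg E A -> A @` M `<=` M) -> E M.
Proof.
move=> cMM inv; have [lM cM] := cMM.
pose F := sjoin [set E' | E E' /\ E' `<=` M].
have EF : E F by apply: (nest_sjoin nE) => N [].
have FM : F `<=` M by apply: sjoin_min => // N [].
have subF Y : E Y -> Y `<=` M -> Y `<=` F by move=> EY YM; apply: sjoin_sup.
suff MF : M `<=` F by rewrite (_ : M = F) //; apply/seteqP; split.
move=> x Mx; apply: contrapT => nFx.
pose G := smeet [set E' | E E' /\ E' x].
have EG : E G by apply: (nest_smeet nE) => N [].
have Gx : G x by move=> N [].
case: (pselect (nest_minus E G x)) => [Gmx|nGmx].
- case: (pselect (exists E1, [/\ E E1, E1 `<=` G, E1 <> G & ~ (E1 `<=` F)]))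
    => [[E1 [EE1 E1G E1nG nE1F]]|nex].
  + have nE1x : ~ E1 x.
      move=> E1x; apply: E1nG; apply/seteqP; split => //.
      exact: smeet_sub.
    have PM := rank1_plus cMM inv EE1 nE1x Mx.
    have EP := nest_plusE nE E1.
    apply: nE1F => w E1w; apply: (subF _ EP PM); exact: plus_sub.
  + apply: nFx; apply: (sjoin_min (nest_cs nE EF) _ Gmx).
    move=> N [EN [NG NnG]]; apply: contrapT => nNF; apply: nex; exists N; split => //.
- have EK := nest_minusE nE G.
  have PM := rank1_plus cMM inv EK nGmx Mx.
  have GP : G `<=` nest_plus E (nest_minus E G).
    apply: sub_smeet => N [EN [KN KnN]].
    have [NG|GN] := nest_tot nE EN EG; last by [].
    case: (pselect (N = G)) => [->//|NnG].
    exfalso; apply: KnN; apply/seteqP; split => //.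
    by apply: sjoin_sup; split.
  apply: nFx; apply: (subF _ (nest_plusE nE _) PM); exact: GP.
Qed.

End Lat2.
Section Main.
Variables (R : realType) (X : normedModType R[i]).
Variable E : set (set X).
Variable J : set (X -> X).
Hypothesis nE : is_nest E.
Hypothesis bJ : bimodule E J.

Lemma bop0 (T : X -> X) : bounded_op T -> T 0 = 0.
Proof.
case=> l _; have := l 1 0 0; rewrite scaler0 addr0 scale1r => h.
by apply: (addrI (T 0)); rewrite addr0 -h.
Qed.

Lemma img_ls (T : X -> X) N : bounded_op T -> lin_subspace N ->
  lin_subspace (T @` N).
Proof.
move=> bT [N0 Nl]; split; first by exists 0 => //; exact: bop0.
move=> a _ _ [x Nx <-] [y Ny <-]; exists (a *: x + y); first exact: Nl.
by case: bT => l _; rewrite l.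
Qed.

Lemma pre_cs (A : X -> X) W : bounded_op A -> closed_subspace W ->
  closed_subspace (A @^-1` W).
Proof.
move=> bA [[W0 Wl] cW]; split.
  split; first by rewrite /preimage /= bop0.
  by move=> a x y Wx Wy; case: bA => l _; rewrite /preimage /= l; exact: Wl.
by case: bA => _ cA; exact: (continuous_closedP A).1 cA _ cW.
Qed.

Lemma cs_bigcap (I : Type) (D : set I) (f : I -> set X) :
  (forall i, D i -> closed_subspace (f i)) -> closed_subspace (\bigcap_(i in D) f i).
Proof.
move=> H; split; last by apply: closed_bigI => i /H[].
split; first by move=> i /H[[h _] _].
move=> a x y Hx Hy i Di; have [[_ h] _] := H i Di.
by apply: h; [apply: Hx|apply: Hy].
Qed.

Lemma J_bop T : J T -> bounded_op T.
Proof. by case: bJ => H *; exact: H. Qed.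

Lemma J_left A T : nest_alg E A -> J T -> J (A \o T).
Proof. by case: bJ => _ _ _ H nA JT; case: (H A T nA JT). Qed.

Local Notation Phi := (Phi_J J).
Local Notation Psi := (Phie_J E J).

Lemma Phi_E N : E (Phi N).
Proof.
apply: (lat nE); first exact: cspan_cs.
move=> A nA _ [v Sv <-].
have cQ := pre_cs (proj1 nA) (cspan_cs [set y | exists T x, [/\ J T, N x & y = T x]]).
apply: (cspan_min cQ _ Sv) => y [T [x [JT Nx ->]]].
apply: cspan_sub; exists (A \o T), x; split => //; exact: J_left.
Qed.

Lemma Phi_mono N1 N2 : N1 `<=` N2 -> Phi N1 `<=` Phi N2.
Proof.
move=> N12; apply: cspan_mono => y [T [x [JT Nx ->]]].
by exists T, x; split => //; exact: N12.
Qed.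

Lemma Phi_adm N : sjoin (Phi @` [set F | E F /\ F `<=` N /\ F <> N]) =
  Phi (nest_minus E N).
Proof.
apply/seteqP; split.
  apply: sjoin_min; first exact: cspan_cs.
  move=> _ [F HF <-]; apply: Phi_mono; exact: sjoin_sup.
pose W := sjoin (Phi @` [set F | E F /\ F `<=` N /\ F <> N]).
have cW : closed_subspace W by exact: cspan_cs.
pose Q := \bigcap_(T in J) (T @^-1` W).
have cQ : closed_subspace Q.
  apply: cs_bigcap => T JT; exact: pre_cs (J_bop JT) cW.
have NQ : nest_minus E N `<=` Q.
  apply: sjoin_min => // F HF x Fx T JT.
  apply: (sjoin_sup (M := Phi F)); first by exists F.
  by apply: cspan_sub; exists T, x.
apply: cspan_min => // y [T [x [JT Nx ->]]].
exact: NQ Nx T JT.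
Qed.

Lemma Phi0 : Phi [set 0] = [set 0].
Proof.
apply/seteqP; split.
  apply: cspan_min; first by apply: (nest_cs nE); exact: nest_0 nE.
  by move=> y [T [x [JT -> ->]]]; rewrite /= bop0 //; exact: J_bop.
by move=> x -> ; have [[H _] _] := cspan_cs [set y | exists T x, [/\ J T, x = 0 & y = T x]].
Qed.

Definition FamP N := [set L | E L /\ forall T, J T -> quot_fin_dim (T @` N) L].

Lemma FamP_anti N1 N2 : lin_subspace N1 -> N1 `<=` N2 -> FamP N2 `<=` FamP N1.
Proof.
move=> lN1 N12 L [EL H]; split => // T JT.
have [s Hs] := qfd_ism (H T JT).
apply: (ism_qfd (s := s)); [exact: (nest_ls nE EL) | exact: (img_ls (J_bop JT) lN1) |].
by move=> _ [x N1x <-]; apply: Hs; exists x => //; exact: N12.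
Qed.

Lemma Psi_mono N1 N2 : lin_subspace N1 -> N1 `<=` N2 -> Psi N1 `<=` Psi N2.
Proof.
move=> lN1 N12; apply: sub_smeet => L HL; apply: smeet_sub.
exact: FamP_anti lN1 N12 _ HL.
Qed.

Lemma FamP_fin N1 N2 : lin_subspace N2 -> quot_fin_dim N2 N1 ->
  FamP N1 `<=` FamP N2.
Proof.
move=> lN2 q L [EL H]; split => // T JT.
have [s1 Hs1] := qfd_ism q.
have [s2 Hs2] := qfd_ism (H T JT).
apply: (ism_qfd (s := map T s1 ++ s2)); [exact: (nest_ls nE EL) | exact: (img_ls (J_bop JT) lN2) |].
move=> _ [x N2x <-]; apply: ism_trans Hs2 _.
by apply: ism_img; [by case: (J_bop JT) | exact: Hs1].
Qed.

Lemma FamP_minus N L : lin_subspace N -> FamP N L -> nest_f E L ->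
  FamP N (nest_minus E L).
Proof.
move=> lN [EL H] [_ _ q]; split; first exact: nest_minusE.
move=> T JT; have [s1 Hs1] := qfd_ism (H T JT).
have [s2 Hs2] := qfd_ism q.
apply: (ism_qfd (s := s1 ++ s2)); [exact: (nest_ls nE (nest_minusE nE L)) | |].
  exact: img_ls (J_bop JT) lN.
move=> y Ty; apply: ism_trans Hs2 _; exact: Hs1.
Qed.

Lemma Psi_E N : E (Psi N).
Proof. by apply: (nest_smeet nE) => L []. Qed.

Lemma Phi_Fam N : FamP N (Phi N).
Proof.
split; first exact: Phi_E.
move=> T JT; exists 0%N, (fun _ => 0); split; first by case.
move=> _ [y Ny <-]; exists (fun _ => 0); rewrite big_ord0 subr0.
by apply: cspan_sub; exists T, y.
Qed.

Lemma Psi_le_Phi N : Psi N `<=` Phi N.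
Proof. exact: smeet_sub (Phi_Fam N). Qed.

Lemma not_att N : lin_subspace N -> nest_f E (Psi N) -> ~ FamP N (Psi N).
Proof.
move=> lN nf F; have Fm := FamP_minus lN F nf.
case: nf => _ [x [Lx nLx]] _; apply: nLx.
exact: (smeet_sub Fm) Lx.
Qed.

Lemma Psi_plus N : lin_subspace N -> nest_f E (Psi N) ->
  Psi N = nest_plus E (Psi N).
Proof.
move=> lN nf; apply/seteqP; split; first exact: plus_sub.
apply: sub_smeet => L HL; apply: smeet_sub; split; first by case: HL.
split; first exact: smeet_sub.
by move=> eq; apply: (not_att lN nf); rewrite eq.
Qed.

End Main.

Theorem mainTheorem14 (R : realType) (X : completeNormedModType R[i])
  (E : set (set X)) (J : set (X -> X)) :
  is_nest E -> bimodule E J ->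
  admissible_sf_pair E (Phi_J J) (Phie_J E J).
Proof.
move=> nE bJ.
have sfPhi : support_fun E (Phi_J J).
  by split; [move=> N _; exact: (Phi_E nE bJ) | move=> N1 N2 _ _; exact: Phi_mono].
split; first split.
- by split => // N EN _; exact: Phi_adm.
- exact: (Phi0 nE bJ).
- split.
  + split; first by move=> N _; exact: (Psi_E J nE).
    by move=> N1 N2 EN1 _; apply: (Psi_mono nE bJ); exact: (nest_ls nE EN1).
  + by move=> N EN nf; apply: (Psi_plus nE bJ) => //; exact: (nest_ls nE EN).
  + move=> N1 N2 EN1 EN2 N12 q; apply/seteqP; split.
      apply: sub_smeet => L HL; apply: smeet_sub.
      by apply: (FamP_fin nE bJ (nest_ls nE EN2) q).
    by apply: (Psi_mono nE bJ) => //; exact: (nest_ls nE EN1).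
- by move=> N EN; exact: (Psi_le_Phi nE bJ).
move=> N EN nf; split; first exact: (Psi_le_Phi nE bJ).
move=> eq; apply: (not_att nE bJ (nest_ls nE EN) nf); rewrite eq.
exact: (Phi_Fam nE bJ).
Qed.
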